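(* Let $A$ be a T-brace and let $a\in\zeta_2(\star,A)$. If $a$ has infinite order in $(A,+)$, then $x\star a\in\langle a\star a\rangle$ and $a\star x\in\langle a\star a\rangle$ for all $x\in A$, where $\langle a\star a\rangle$ denotes the cyclic subgroup of $(A,+)$ generated by $a\star a$.
   Context: A (left) brace is a set $A$ with two operations $+$ and $\cdot$ such that $(A,+)$ is an abelian group, $(A,\cdot)$ is a group, and $a(b+c)=ab+ac-a$ for all $a,b,c\in A$. Put $a\star b=ab-a-b$. A subbrace is a subset which is a subgroup of both $(A,+)$ and $(A,\cdot)$; a subbrace $L$ is an ideal if $a\star z, z\star a\in L$ for all $a\in A$, $z\in L$, and then the quotient brace $A/L$ is defined. $A$ is a T-brace if whenever $I$ is an ideal of $J$ and $J$ is an ideal of $A$, then $I$ is an ideal of $A$. The $\star$-center is $\zeta(\star,A)=\{a: a\star x=x\star a=0\ \forall x\}$; $\zeta_2(\star,A)$ is given by $\zeta_2(\star,A)/\zeta(\star,A)=\zeta(\star,A/\zeta(\star,A))$. *)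

(* Defs.v *)
From mathcomp Require Import all_boot all_algebra.
Set Implicit Arguments. Unset Strict Implicit. Unset Printing Implicit Defensive.
Import GRing.Theory.
Local Open Scope ring_scope.

Record is_brace (A : zmodType) (mul : A -> A -> A) (one : A) (inv : A -> A)
  : Prop := {
  brace_mulA : forall a b c, mul a (mul b c) = mul (mul a b) c;
  brace_mul1l : forall a, mul one a = a;
  brace_mul1r : forall a, mul a one = a;
  brace_mulVl : forall a, mul (inv a) a = one;
  brace_mulVr : forall a, mul a (inv a) = one;
  brace_law : forall a b c, mul a (b + c) = mul a b + mul a c - a
}.

Definition star (A : zmodType) (mul : A -> A -> A) (a b : A) : A :=
  mul a b - a - b.

Definition subbrace (A : zmodType) (mul : A -> A -> A) (one : A)
  (inv : A -> A) (S : A -> Prop) : Prop :=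
  [/\ S 0, (forall x y, S x -> S y -> S (x - y)),
      S one, (forall x y, S x -> S y -> S (mul x y))
    & (forall x, S x -> S (inv x))].

(* Taking J = the whole of A gives the ideals of A. *)
Definition ideal_of (A : zmodType) (mul : A -> A -> A) (one : A)
  (inv : A -> A) (J I : A -> Prop) : Prop :=
  [/\ subbrace mul one inv I, (forall z, I z -> J z)
    & forall a z, J a -> I z -> I (star mul a z) /\ I (star mul z a)].

Definition T_brace (A : zmodType) (mul : A -> A -> A) (one : A)
  (inv : A -> A) : Prop :=
  forall I J : A -> Prop,
    ideal_of mul one inv (fun _ => True) J ->
    ideal_of mul one inv J I ->
    ideal_of mul one inv (fun _ => True) I.

Definition star_center (A : zmodType) (mul : A -> A -> A) (a : A) : Prop :=
  forall x, star mul a x = 0 /\ star mul x a = 0.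

(* zeta_2(star, A): a + zeta is in the star-center of A/zeta; in the quotient
   brace (a+L) * (x+L) = (a * x) + L, so this unfolds to the following. *)
Definition star_center2 (A : zmodType) (mul : A -> A -> A) (a : A) : Prop :=
  forall x, star_center mul (star mul a x) /\ star_center mul (star mul x a).

Definition in_cyclic (A : zmodType) (g y : A) : Prop :=
  exists k : int, y = g *~ k.

(* Main.v *)
Require Import Defs.
From mathcomp Require Import all_boot all_algebra.
Import GRing.Theory.
Local Open Scope ring_scope.

Lemma addf_mulz (A : zmodType) (f : A -> A)
  (fD : forall x y, f (x + y) = f x + f y) x (k : int) :
  f (x *~ k) = f x *~ k.
Proof.
have f0 : f 0 = 0.
  by apply: (addrI (f 0)); rewrite -fD !addr0.
have fN : forall y, f (- y) = - f y.
  by move=> y; apply: (addrI (f y)); rewrite -fD !subrr.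
elim/int_rec: k => [|n IH|n IH]; first by rewrite !mulr0z.
  by rewrite -[n.+1]addn1 PoszD !mulrzDr fD IH !mulr1z.
by rewrite -[n.+1]addn1 PoszD opprD !mulrzDr fD IH !mulrN1z fN.
Qed.

Lemma closed_mulz (A : zmodType) (P : A -> Prop) (P0 : P 0)
  (PB : forall x y, P x -> P y -> P (x - y)) x (k : int) :
  P x -> P (x *~ k).
Proof.
move=> Px.
have PN : forall y, P y -> P (- y) by move=> y Py; rewrite -sub0r; apply: PB.
have PD : forall y z, P y -> P z -> P (y + z).
  by move=> y z Py Pz; rewrite -[z]opprK; apply: PB => //; apply: PN.
elim/int_rec: k => [|n IH|n IH]; first by rewrite mulr0z.
  by rewrite -[n.+1]addn1 PoszD mulrzDr mulr1z; apply: PD.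
by rewrite -[n.+1]addn1 PoszD opprD mulrzDr mulrN1z; apply: PD => //; apply: PN.
Qed.

Definition lam (A : zmodType) (mul : A -> A -> A) u y := mul u y - u.
Arguments lam {A} mul u y.


Lemma one0 (A : zmodType) (mul : A -> A -> A) one inv (HA : is_brace mul one inv) :
  (forall u, mul u 0 = u) /\ one = 0.
Proof.
have m0 : forall u, mul u 0 = u.
  move=> u; have E := brace_law HA u 0 0; rewrite addr0 in E.
  by apply: (addrI (mul u 0)); rewrite [in RHS]E subrK.
split => //.
have E1 := brace_mulVl HA 0; rewrite m0 in E1.
by have := brace_mulVr HA 0; rewrite E1 (brace_mul1r HA).
Qed.

Theorem lemma4p3 (A : zmodType) (mul : A -> A -> A) (one : A) (inv : A -> A)
  (HA : is_brace mul one inv) (HT : T_brace mul one inv) (a : A)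
  (Ha : star_center2 mul a)
  (Hinf : forall n : nat, (0 < n)%N -> a *+ n != 0) :
  forall x : A, in_cyclic (star mul a a) (star mul x a) /\
                in_cyclic (star mul a a) (star mul a x).
Proof.
have [m0 one_0] := one0 _ _ _ _ HA.
set L := lam mul.
set Z := star_center mul.
have lamD : forall u y y', L u (y + y') = L u y + L u y'.
  move=> w y y'; rewrite /L /lam (brace_law HA).
  by rewrite !addrA (addrAC (mul w y)).
have lamMz : forall u y (k : int), L u (y *~ k) = L u y *~ k.
  by move=> u y k; apply: addf_mulz.
have lamM : forall u v y, L (mul u v) y = L u (L v y).
  move=> w v y; rewrite /L /lam -(brace_mulA HA).
  have E := brace_law HA w v (- v); rewrite subrr m0 in E.
  have E2 : mul w (- v) = w + w - mul w v.
    have E' : w + w = mul w v + mul w (- v).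
      by move/(congr1 (fun t => t + w)): E; rewrite subrK.
    by rewrite E' addrAC subrr add0r.
  rewrite [mul w (_ - v)](brace_law HA) E2.
  rewrite -[RHS]addrA -[RHS]addrA; congr (_ + _); by rewrite addrAC -opprD subrr add0r.
have lam0 : forall y, L 0 y = y.
  by move=> y; rewrite /L /lam subr0 -{1}one_0 (brace_mul1l HA).
have mulE : forall u v, mul u v = u + L u v.
  by move=> u v; rewrite /L /lam addrC subrK.
have starE : forall u y, star mul u y = L u y - y.
  by move=> u y; rewrite /star /L /lam.
have ZE : forall z, Z z -> (forall y, L z y = y) /\ (forall y, L y z = z).
  move=> z Hz; split => y; have [h1 h2] := Hz y; apply/eqP; rewrite -subr_eq0 -starE.
    by rewrite h1.
  by rewrite h2.
have Zshift : forall z v y, Z z -> L (z + v) y = L v y.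
  move=> z v y Hz; have [E1 _] := ZE z Hz.
  by rewrite -{1}(E1 v) -mulE lamM E1.
have lamN : forall w y, L w (- y) = - L w y.
  by move=> w y; rewrite -mulrN1z lamMz mulrN1z.
have Z0 : Z 0.
  move=> y; rewrite !starE lam0 subrr; split => //.
  by rewrite /L /lam m0 subrr subr0.
have Zsub : forall z z', Z z -> Z z' -> Z (z - z').
  move=> z z' Hz Hz' y; have [E1 E2] := ZE z Hz; have [E1' E2'] := ZE z' Hz'.
  rewrite !starE Zshift // -[L (- z') y](Zshift z') // subrr lam0 subrr; split => //.
  by rewrite lamD lamN E2 E2' subrr.
have ZM : forall z (k : int), Z z -> Z (z *~ k).
  by move=> z k Hz; exact: (closed_mulz _ _ Z0 Zsub).
have Zx : forall x, Z (star mul x a) /\ Z (star mul a x).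
  by move=> x; have [h1 h2] := Ha x.
set c := star mul a a.
have Zc : Z c by have [] := Zx a.
have lamS : forall (k : int) y, L (a *~ (k + 1)) y = L a (L (a *~ k) y).
  move=> k y.
  have LA : L a a = c + a by rewrite /c starE subrK.
  have E : mul a (a *~ k) = c *~ k + a *~ (k + 1).
    by rewrite mulE lamMz LA mulrzDl mulrzDr mulr1z addrCA [a + _]addrC.
  by rewrite -lamM E Zshift //; exact: ZM.
have fwd : forall (k : int) y, L a (y + star mul a y *~ k) = y + star mul a y *~ (k + 1).
  move=> k y; rewrite lamD lamMz.
  have [_ ->] := ZE _ (proj2 (Zx y)).
  by rewrite mulrzDr mulr1z addrCA addrC; congr (_ + _); rewrite starE addrC subrK.
have linv : forall t, L (inv a) (L a t) = t.
  by move=> t; rewrite -lamM (brace_mulVl HA) one_0 lam0.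
have pow : forall (k : int) y, L (a *~ k) y = y + star mul a y *~ k.
  move=> k y; elim/int_rec: k => [|n IH|n IH].
  - by rewrite !mulr0z lam0 addr0.
  - by rewrite -[n.+1]addn1 PoszD lamS IH fwd.
  - have := lamS (- n.+1%:Z) y; rewrite -[n.+1]addn1 PoszD opprD addrK IH.
    move=> G; have F := fwd (- n%:Z - 1) y; rewrite subrK G in F.
    by have := congr1 (L (inv a)) F; rewrite !linv => ->.
have starD : forall w y y', star mul w (y + y') = star mul w y + star mul w y'.
  by move=> w y y'; rewrite !starE lamD opprD addrACA.
have starMz : forall w y (k : int), star mul w (y *~ k) = star mul w y *~ k.
  by move=> w y k; apply: addf_mulz.
have starJ : forall (k : int) z y, Z z -> star mul (a *~ k + z) y = star mul a y *~ k.
  by move=> k z y Hz; rewrite starE [a *~ k + z]addrC Zshift // pow addrAC subrr add0r.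
have SB : forall S : A -> Prop, S 0 -> (forall x y, S x -> S y -> S (x - y)) ->
    (forall x y, S x -> S y -> S (L x y)) -> (forall x y, S x -> S y -> S (L (inv x) y)) ->
    subbrace mul one inv S.
  move=> S S0 SB SL SLi.
  have SN : forall y, S y -> S (- y) by move=> y Sy; rewrite -sub0r; apply: SB.
  have SD : forall y z, S y -> S z -> S (y + z).
    by move=> y z Sy Sz; rewrite -[z]opprK; apply: SB => //; apply: SN.
  have invE : forall x, inv x = - L (inv x) x.
    move=> x; apply/eqP; rewrite -addr_eq0 -mulE (brace_mulVl HA) one_0 //.
  split => //; first by rewrite one_0.
    by move=> x y Sx Sy; rewrite mulE; apply: SD => //; apply: SL.
  by move=> x Sx; rewrite invE; apply: SN; apply: SLi.
have ZN : forall z, Z z -> Z (- z) by move=> z Hz; rewrite -sub0r; apply: Zsub.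
have ZD : forall z z', Z z -> Z z' -> Z (z + z').
  by move=> z z' Hz Hz'; rewrite -[z']opprK; apply: Zsub => //; apply: ZN.
set J := fun y => exists k z, Z z /\ y = a *~ k + z.
set I := fun y => exists k m, y = a *~ k + c *~ m.
have ZJ : forall z, Z z -> J z by move=> z Hz; exists 0, z; rewrite mulr0z add0r.
have J_lam : forall x y, J y -> J (L x y).
  move=> x y [k [z [Hz ->]]]; have [_ E2] := ZE z Hz.
  have LA : L x a = a + star mul x a by rewrite starE addrC subrK.
  exists k, (star mul x a *~ k + z); split; first by apply: ZD => //; apply: ZM; exact: (proj1 (Zx x)).
  by rewrite lamD lamMz E2 LA mulrzDl addrA.
have J0 : J 0 by apply: ZJ.
have JB : forall x y, J x -> J y -> J (x - y).
  move=> x y [k [z [Hz ->]]] [k' [z' [Hz' ->]]].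
  exists (k - k'), (z - z'); split; first exact: Zsub.
  by rewrite mulrzBr opprD addrACA.
have subJ : subbrace mul one inv J.
  by apply: SB => // x y _; apply: J_lam.
have idJ : ideal_of mul one inv (fun _ => True) J.
  split => // u z _ [k [w [Hw ->]]]; split.
    rewrite starE; apply: JB; first apply: J_lam; by exists k, w.
  by rewrite starJ //; apply: ZJ; apply: ZM; exact: (proj2 (Zx u)).
have starJa : forall u, J u -> exists k, star mul u a = c *~ k.
  by move=> u [k [w [Hw ->]]]; exists k; rewrite starJ.
have I_lam : forall x y, J x -> I y -> I (L x y).
  move=> x y Jx [k' [m' ->]]; have [k Ek] := starJa x Jx.
  have LA : L x a = a + c *~ k by rewrite -Ek starE addrC subrK.
  have [_ E2] := ZE c Zc.
  exists k', (k * k' + m'); rewrite lamD !lamMz E2 LA mulrzDl mulrzDr mulrzA -!addrA.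
  done.
have IJ : forall y, I y -> J y.
  by move=> y [k [m ->]]; exists k, (c *~ m); split => //; apply: ZM.
have I0 : I 0 by exists 0, 0; rewrite !mulr0z addr0.
have IB : forall x y, I x -> I y -> I (x - y).
  move=> x y [k [m ->]] [k' [m' ->]].
  by exists (k - k'), (m - m'); rewrite !mulrzBr opprD addrACA.
have subI : subbrace mul one inv I.
  apply: SB => // x y Ix Iy; apply: I_lam => //; first exact: IJ.
  by case: subJ => _ _ _ _ Hinv; apply: Hinv; apply: IJ.
have idI : ideal_of mul one inv J I.
  split => // u y Ju Iy; split.
    by rewrite starE; apply: IB => //; apply: I_lam.
  case: Iy => k' [m' ->]; rewrite starJ; last exact: ZM.
  case: Ju => k [w [Hw ->]]; rewrite starD starMz (proj2 (Hw a)) addr0.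
  by exists 0, (k * k'); rewrite mulr0z add0r mulrzA.
have idIA := HT I J idJ idI.
have key : forall w (k m : int), Z w -> w = a *~ k + c *~ m ->
    (Z (a *~ k) -> w *~ k = 0) -> in_cyclic c w.
  move=> w k m Zw Ew Hk.
  have Zak : Z (a *~ k).
    have -> : a *~ k = w - c *~ m by rewrite Ew addrK.
    by apply: Zsub => //; apply: ZM.
  have ck : c *~ k = 0 by rewrite -/c -starMz; exact: (proj2 (Zak a)).
  have := Hk Zak; rewrite Ew mulrzDl -!mulrzA [m * k]mulrC [c *~ (k * m)]mulrzA ck mul0rz addr0.
  move=> Ea; suff k0 : k = 0 by exists m; rewrite k0 mulr0z add0r.
  have [//|kn0] := eqVneq k 0; exfalso.
  have [n [En n0]] : exists n : nat, k * k = n%:Z /\ (0 < n)%N.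
    case: k kn0 {Ea Ew Hk Zak ck} => n kn0.
      exists (n * n)%N; rewrite PoszM; split => //.
      by rewrite muln_gt0 andbb lt0n; apply: contraNneq kn0 => ->.
    by exists (n.+1 * n.+1)%N; rewrite NegzE mulrNN PoszM.
  by move: Ea; rewrite En -pmulrn; apply/eqP; apply: Hinf.
move=> x; have [Ix Ix'] := (let: And3 _ _ h := idIA in h) x a Logic.I (ltac:(by exists 1, 0; rewrite mulr0z addr0 mulr1z)).
split.
- case: Ix => k [m Ew]; apply: (key _ k m (proj1 (Zx x)) Ew) => Zak.
  by rewrite -starMz; exact: (proj2 (Zak x)).
- case: Ix' => k [m Ew]; apply: (key _ k m (proj2 (Zx x)) Ew) => Zak.
  by have := proj1 (Zak x); rewrite starE pow addrC addKr.
Qed.
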